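(* Let $s\geq 3$ and let $p,q$ be coprime integers with $q>0$ and $p/q\geq 4s+7$. Then for every homomorphism (action) $\Phi$ of $G_{K_s}(p,q)$ into $\mathrm{Homeo}^+(\mathbb{R})$ there is a point $x\in\mathbb{R}$ fixed by every element of $\Phi(G_{K_s}(p,q))$.
   Context: Let $R=c\,l\,c\,l^{-1}c^{-1}l^{-s}c^{-1}l^{-1}c\,l\,c\,l^{s-1}$, $M=c$ and $L=c^{-(2s-2)}\,l\,c\,l^{s}\,c\,l^{s}\,c\,l\,c^{-(2s+9)}$, and $G_{K_s}(p,q)=\langle c,l\mid R,\ M^pL^q\rangle$, the fundamental group of $p/q$ Dehn surgery on the $(-2,3,2s+1)$-pretzel knot. $\mathrm{Homeo}^+(\mathbb{R})$ is the group of orientation-preserving homeomorphisms of $\mathbb{R}$. *)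

(* Defs.v *)
From Stdlib Require Import Reals ZArith List.
Open Scope R_scope.

(* An orientation-preserving homeomorphism of R: a continuous strictly
   increasing bijection (its inverse is then automatically continuous). *)
Record homeo := Homeo {
  hf : R -> R;
  hinv : R -> R;
  hf_hinv : forall x, hf (hinv x) = x;
  hinv_hf : forall x, hinv (hf x) = x;
  hf_cont : continuity hf;
  hf_incr : forall x y, x < y -> hf x < hf y
}.

Definition hpow (h : homeo) (n : Z) : R -> R :=
  match n with
  | Z0 => fun x => x
  | Zpos k => Nat.iter (Pos.to_nat k) (hf h)
  | Zneg k => Nat.iter (Pos.to_nat k) (hinv h)
  end.

(* A word in the free group on c, l: a list of syllables (gen, exponent),
   gen = true for c, false for l. *)
Definition word := list (bool * Z).

(* Evaluation at the pair (Φ(c), Φ(l)) = (a, b); group law = composition,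
   (g h)(x) = g (h x). *)
Fixpoint eval_word (a b : homeo) (w : word) : R -> R :=
  match w with
  | nil => fun x => x
  | (g, n) :: w' => fun x => hpow (if g then a else b) n (eval_word a b w' x)
  end.

Definition cc (n : Z) : word := (true, n) :: nil.
Definition ll (n : Z) : word := (false, n) :: nil.

Fixpoint wpow (w : word) (n : nat) : word :=
  match n with O => nil | S k => w ++ wpow w k end.

Definition relR (s : Z) : word :=
  cc 1 ++ ll 1 ++ cc 1 ++ ll (-1) ++ cc (-1) ++ ll (- s) ++ cc (-1) ++ ll (-1)
  ++ cc 1 ++ ll 1 ++ cc 1 ++ ll (s - 1).

Definition wordM : word := cc 1.

Definition wordL (s : Z) : word :=
  cc (- (2 * s - 2)) ++ ll 1 ++ cc 1 ++ ll s ++ cc 1 ++ ll s ++ cc 1 ++ ll 1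
  ++ cc (- (2 * s + 9)).

(* M^p L^q (q > 0); since M = c, M^p is the single syllable c^p (p in Z). *)
Definition surgery_rel (s p q : Z) : word :=
  cc p ++ wpow (wordL s) (Z.to_nat q).

(* A homomorphism G_{K_s}(p,q) -> Homeo+(R) is exactly a pair (a,b) = (Φ(c),Φ(l))
   on which both relators evaluate to the identity. *)
Definition is_action (s p q : Z) (a b : homeo) : Prop :=
  (forall x, eval_word a b (relR s) x = x) /\
  (forall x, eval_word a b (surgery_rel s p q) x = x).

(* Main.v *)
Require Import Defs.
From Stdlib Require Import Reals ZArith List.
From Stdlib Require Import Lia Lra Classical.
Open Scope R_scope.

Lemma hf_inj (h : homeo) x y : hf h x = hf h y -> x = y.
Proof. intro E. rewrite <- (hinv_hf h x), <- (hinv_hf h y), E. reflexivity. Qed.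

Lemma hf_le (h : homeo) x y : x <= y -> hf h x <= hf h y.
Proof. intros [H|H]. left; apply hf_incr; exact H. right; subst; reflexivity. Qed.

Lemma hinv_lt (h : homeo) x y : x < y -> hinv h x < hinv h y.
Proof.
  intro H. destruct (Rlt_le_dec (hinv h x) (hinv h y)) as [L|L]; auto.
  apply (hf_le h) in L. rewrite !hf_hinv in L. lra.
Qed.

Lemma hpow1 h x : hpow h 1 x = hf h x. Proof. reflexivity. Qed.
Lemma hpow0 h x : hpow h 0 x = x. Proof. reflexivity. Qed.

Lemma hpow_succ h n x : hpow h (Z.succ n) x = hf h (hpow h n x).
Proof.
  destruct n as [|k|k].
  - reflexivity.
  - change (Z.succ (Zpos k)) with (Zpos (k + 1)). unfold hpow.
    rewrite Pos2Nat.inj_add, Pos2Nat.inj_1, Nat.add_1_r. reflexivity.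
  - destruct (Pos.succ_pred_or k) as [->|E].
    + simpl. rewrite hf_hinv. reflexivity.
    + rewrite <- E.
      replace (Z.succ (Zneg (Pos.succ (Pos.pred k)))) with (Zneg (Pos.pred k)) by lia.
      unfold hpow. rewrite Pos2Nat.inj_succ, Nat.iter_succ, hf_hinv. reflexivity.
Qed.

Lemma hpow_pred h n x : hpow h (Z.pred n) x = hinv h (hpow h n x).
Proof.
  rewrite <- (Z.succ_pred n) at 2. rewrite hpow_succ, hinv_hf. reflexivity.
Qed.

Lemma hpow_add h m n x : hpow h (m + n) x = hpow h m (hpow h n x).
Proof.
  revert x. induction m using Z.peano_ind; intro x.
  - reflexivity.
  - rewrite Z.add_succ_l, !hpow_succ, IHm. reflexivity.
  - rewrite Z.add_pred_l, !hpow_pred, IHm. reflexivity.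
Qed.

Lemma hpow_lt h n x y : x < y -> hpow h n x < hpow h n y.
Proof.
  revert x y. induction n using Z.peano_ind; intros x y H.
  - exact H.
  - rewrite !hpow_succ. apply hf_incr. auto.
  - rewrite !hpow_pred. apply hinv_lt. auto.
Qed.

Lemma hpow_le h n x y : x <= y -> hpow h n x <= hpow h n y.
Proof. intros [H|H]. left; apply hpow_lt; auto. right; subst; reflexivity. Qed.

Lemma hpow_inj h n x y : hpow h n x = hpow h n y -> x = y.
Proof.
  intro E. destruct (Rtotal_order x y) as [L|[L|L]]; auto;
  apply (hpow_lt h n) in L; lra.
Qed.

Lemma hpow_fix h x : hf h x = x -> forall n, hpow h n x = x.
Proof.
  intros Hx n. induction n using Z.peano_ind.
  - reflexivity.
  - rewrite hpow_succ, IHn. exact Hx.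
  - rewrite hpow_pred, IHn. rewrite <- Hx at 1. apply hinv_hf.
Qed.

Lemma hpow_cancel h n x : hpow h n (hpow h (- n) x) = x.
Proof. rewrite <- hpow_add, Z.add_opp_diag_r. reflexivity. Qed.

Lemma hpow_P h x0 : x0 <= hf h x0 -> forall n, (0 <= n)%Z -> x0 <= hpow h n x0.
Proof.
  intros H n Hn. pattern n; apply natlike_ind; [ | | exact Hn].
  - simpl; lra.
  - intros m Hm IH. rewrite hpow_succ. apply Rle_trans with (hf h x0); auto. apply hf_le; auto.
Qed.

Lemma hpow_S h x0 : x0 < hf h x0 -> forall n, (0 < n)%Z -> x0 < hpow h n x0.
Proof.
  intros H n Hn. replace n with (Z.succ (n-1)) by lia. rewrite hpow_succ.
  apply Rlt_le_trans with (hf h x0); auto. apply hf_le.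
  apply hpow_P; [lra|lia].
Qed.

Lemma hpow_N h x0 : hf h x0 <= x0 -> forall n, (0 <= n)%Z -> hpow h n x0 <= x0.
Proof.
  intros H n Hn. pattern n; apply natlike_ind; [ | | exact Hn].
  - simpl; lra.
  - intros m Hm IH. rewrite hpow_succ. apply Rle_trans with (hf h x0); auto. apply hf_le; auto.
Qed.

Lemma hpow_SN h x0 : hf h x0 < x0 -> forall n, (0 < n)%Z -> hpow h n x0 < x0.
Proof.
  intros H n Hn. replace n with (Z.succ (n-1)) by lia. rewrite hpow_succ.
  apply Rle_lt_trans with (hf h x0); auto. apply hf_le.
  apply hpow_N; [lra|lia].
Qed.

Lemma eval_app a b w1 w2 x :
  eval_word a b (w1 ++ w2) x = eval_word a b w1 (eval_word a b w2 x).
Proof.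
  induction w1 as [|[g n] w1 IH]; simpl; auto. rewrite IH. reflexivity.
Qed.

Lemma eval_wpow a b w n x : eval_word a b (wpow w n) x = Nat.iter n (eval_word a b w) x.
Proof.
  induction n; simpl; auto. rewrite eval_app, IHn. reflexivity.
Qed.

Lemma hpow_cancel1 h x : hpow h 1 (hpow h (-1) x) = x.
Proof. exact (hpow_cancel h 1 x). Qed.

Lemma split_l h s t : hpow h s t = hpow h (s-1) (hpow h 1 t).
Proof. rewrite <- hpow_add. f_equal. lia. Qed.
Lemma split_r h s t : hpow h s t = hpow h 1 (hpow h (s-1) t).
Proof. rewrite <- hpow_add. f_equal. lia. Qed.

Definition Xf (a b : homeo) (s : Z) (x : R) : R :=
  hpow b 1 (hpow a 1 (hpow b s (hpow a 1 (hpow b s (hpow a 1 (hpow b 1 x)))))).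

Lemma star a b s : (forall x, eval_word a b (relR s) x = x) -> forall y,
  hpow b 1 (hpow a 1 (hpow b s (hpow a 1 (hpow b 1 y)))) =
  hpow a 1 (hpow b 1 (hpow a 1 (hpow b (s-1) (hpow a 1 (hpow b 1 (hpow a 1 y)))))).
Proof.
  intros HR y.
  assert (E : hpow a 1 (hpow b 1 (hpow a 1 (hpow b (-1) (hpow a (-1) (hpow b (- s)
    (hpow a (-1) (hpow b (-1) (hpow a 1 (hpow b 1 (hpow a 1 (hpow b (s-1)
    (hpow a 1 (hpow b 1 (hpow a 1 y)))))))))))))) = hpow a 1 (hpow b 1 (hpow a 1 y)))
    by exact (HR _).
  apply hpow_inj in E. apply hpow_inj in E. apply hpow_inj in E.
  rewrite <- E at 1.
  repeat (rewrite hpow_cancel1 || rewrite hpow_cancel). reflexivity.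
Qed.

Lemma comm_X a b s : (forall x, eval_word a b (relR s) x = x) ->
  forall x, hpow a 1 (Xf a b s x) = Xf a b s (hpow a 1 x).
Proof.
  intros HR x. unfold Xf.
  rewrite (split_l b s (hpow a 1 (hpow b s (hpow a 1 (hpow b 1 x))))).
  rewrite (star a b s HR x).
  rewrite (split_r b s (hpow a 1 (hpow b 1 (hpow a 1 x)))).
  rewrite (star a b s HR). reflexivity.
Qed.

Lemma comm_pow (h : homeo) (F : R -> R) :
  (forall x, hf h (F x) = F (hf h x)) -> forall k x, hpow h k (F x) = F (hpow h k x).
Proof.
  intros Hc.
  assert (Hi : forall x, hinv h (F x) = F (hinv h x)).
  { intro x. apply (hf_inj h). rewrite hf_hinv, Hc, hf_hinv. reflexivity. }
  intro k. induction k using Z.peano_ind; intro x.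
  - reflexivity.
  - rewrite !hpow_succ, IHk, Hc. reflexivity.
  - rewrite !hpow_pred, IHk, Hi. reflexivity.
Qed.

Lemma iterL a b s : (forall x, eval_word a b (relR s) x = x) -> forall n x,
  Nat.iter n (eval_word a b (wordL s)) x =
  hpow a (-((4*s+7) * Z.of_nat n)) (Nat.iter n (Xf a b s) x).
Proof.
  intros HR.
  assert (Hc : forall k x, hpow a k (Xf a b s x) = Xf a b s (hpow a k x)).
  { apply comm_pow. intro x. exact (comm_X a b s HR x). }
  induction n; intro x.
  - simpl. rewrite Z.mul_0_r. reflexivity.
  - rewrite !Nat.iter_succ, IHn.
    change (eval_word a b (wordL s) ?z) with
      (hpow a (-(2*s-2)) (Xf a b s (hpow a (-(2*s+9)) z))).
    rewrite <- hpow_add, <- Hc, <- hpow_add. f_equal.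
    all: try (rewrite Nat2Z.inj_succ; ring).
Qed.

Lemma surg a b s p q : (0 < q)%Z -> is_action s p q a b -> forall x,
  hpow a (p - (4*s+7)*q) (Nat.iter (Z.to_nat q) (Xf a b s) x) = x.
Proof.
  intros Hq [HR HS] x. specialize (HS x). unfold surgery_rel in HS.
  rewrite eval_app, eval_wpow, (iterL a b s HR) in HS.
  simpl in HS. rewrite <- hpow_add, Z2Nat.id in HS by lia.
  rewrite <- HS at 2. f_equal; try ring.
Qed.

Lemma cP h n x0 y : x0 <= hpow h n x0 -> x0 <= y -> x0 <= hpow h n y.
Proof. intros H1 H2. apply Rle_trans with (hpow h n x0); auto. apply hpow_le; auto. Qed.
Lemma cS1 h n x0 y : x0 < hpow h n x0 -> x0 <= y -> x0 < hpow h n y.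
Proof. intros H1 H2. apply Rlt_le_trans with (hpow h n x0); auto. apply hpow_le; auto. Qed.
Lemma cS2 h n x0 y : x0 <= hpow h n x0 -> x0 < y -> x0 < hpow h n y.
Proof. intros H1 H2. apply Rle_lt_trans with (hpow h n x0); auto. apply hpow_lt; auto. Qed.
Lemma cN h n x0 y : hpow h n x0 <= x0 -> y <= x0 -> hpow h n y <= x0.
Proof. intros H1 H2. apply Rle_trans with (hpow h n x0); auto. apply hpow_le; auto. Qed.
Lemma cNS1 h n x0 y : hpow h n x0 < x0 -> y <= x0 -> hpow h n y < x0.
Proof. intros H1 H2. apply Rle_lt_trans with (hpow h n x0); auto. apply hpow_le; auto. Qed.
Lemma cNS2 h n x0 y : hpow h n x0 <= x0 -> y < x0 -> hpow h n y < x0.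
Proof. intros H1 H2. apply Rlt_le_trans with (hpow h n x0); auto. apply hpow_lt; auto. Qed.

Lemma Xf_le a b s x y : x <= y -> Xf a b s x <= Xf a b s y.
Proof. intro H. unfold Xf. repeat apply hpow_le. exact H. Qed.

Lemma Xf_pos a b s x0 : (0 <= s)%Z -> x0 < hf a x0 -> x0 <= hf b x0 -> x0 < Xf a b s x0.
Proof.
  intros Hs Ha Hb.
  assert (A1 : x0 < hpow a 1 x0) by exact Ha.
  assert (B1 : x0 <= hpow b 1 x0) by exact Hb.
  assert (BS : x0 <= hpow b s x0) by (apply hpow_P; auto).
  unfold Xf.
  apply cS2; auto. apply cS1; auto. apply cP; auto. apply cP; [lra|].
  apply cP; auto. apply cP; [lra|]. auto.
Qed.

Lemma Xf_neg a b s x0 : (0 <= s)%Z -> hf a x0 < x0 -> hf b x0 <= x0 -> Xf a b s x0 < x0.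
Proof.
  intros Hs Ha Hb.
  assert (A1 : hpow a 1 x0 < x0) by exact Ha.
  assert (B1 : hpow b 1 x0 <= x0) by exact Hb.
  assert (BS : hpow b s x0 <= x0) by (apply hpow_N; auto).
  unfold Xf.
  apply cNS2; auto. apply cNS1; auto. apply cN; auto. apply cN; [lra|].
  apply cN; auto. apply cN; [lra|]. auto.
Qed.

Lemma iter_pos (F : R -> R) x0 : (forall u v, u <= v -> F u <= F v) -> x0 < F x0 ->
  forall n, (1 <= n)%nat -> x0 < Nat.iter n F x0.
Proof.
  intros Hm H n Hn. induction n. lia.
  rewrite Nat.iter_succ. destruct n. simpl; auto.
  apply Rlt_le_trans with (F x0); auto. apply Hm. left. apply IHn. lia.
Qed.

Lemma iter_neg (F : R -> R) x0 : (forall u v, u <= v -> F u <= F v) -> F x0 < x0 ->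
  forall n, (1 <= n)%nat -> Nat.iter n F x0 < x0.
Proof.
  intros Hm H n Hn. induction n. lia.
  rewrite Nat.iter_succ. destruct n. simpl; auto.
  apply Rle_lt_trans with (F x0); auto. apply Hm. left. apply IHn. lia.
Qed.

Lemma opposition a b s p q : (3 <= s)%Z -> (0 < q)%Z -> ((4 * s + 7) * q <= p)%Z ->
  is_action s p q a b -> forall x0,
  (x0 < hf a x0 -> hf b x0 < x0) /\ (hf a x0 < x0 -> x0 < hf b x0).
Proof.
  intros Hs Hq Hp Hact x0. pose proof (surg a b s p q Hq Hact x0) as E.
  assert (Hn : (1 <= Z.to_nat q)%nat) by lia.
  split; intro Ha.
  - destruct (Rlt_le_dec (hf b x0) x0) as [L|L]; auto. exfalso.
    assert (P1 := Xf_pos a b s x0 ltac:(lia) Ha L).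
    assert (P2 := iter_pos _ x0 (Xf_le a b s) P1 _ Hn).
    assert (P3 : x0 <= hpow a (p - (4*s+7)*q) x0) by (apply hpow_P; [lra|lia]).
    assert (P4 := hpow_lt a (p - (4*s+7)*q) _ _ P2). lra.
  - destruct (Rlt_le_dec x0 (hf b x0)) as [L|L]; auto. exfalso.
    assert (P1 := Xf_neg a b s x0 ltac:(lia) Ha L).
    assert (P2 := iter_neg _ x0 (Xf_le a b s) P1 _ Hn).
    assert (P3 : hpow a (p - (4*s+7)*q) x0 <= x0) by (apply hpow_N; [lra|lia]).
    assert (P4 := hpow_lt a (p - (4*s+7)*q) _ _ P2). lra.
Qed.

Lemma no_up a b s : (forall x, eval_word a b (relR s) x = x) ->
  (forall x, x < hf b x) -> (forall x, hf a x <= x) -> False.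
Proof.
  intros HR Hb Ha. pose proof (star a b s HR 0) as E.
  set (w := hpow a 1 (hpow b 1 0)) in *.
  rewrite (split_l b s w) in E.
  assert (L1 : hpow b 1 (hpow a 1 (hpow b (s-1) w)) <
               hpow b 1 (hpow a 1 (hpow b (s-1) (hpow b 1 w)))).
  { repeat apply hpow_lt. apply Hb. }
  assert (L2 : hpow a 1 (hpow b 1 (hpow a 1 0)) <= w).
  { unfold w. repeat apply hpow_le. apply Ha. }
  assert (L3 : hpow b 1 (hpow a 1 (hpow b (s-1) (hpow a 1 (hpow b 1 (hpow a 1 0))))) <=
               hpow b 1 (hpow a 1 (hpow b (s-1) w))).
  { apply hpow_le, hpow_le, hpow_le. exact L2. }
  assert (L4 := Ha (hpow b 1 (hpow a 1 (hpow b (s-1) (hpow a 1 (hpow b 1 (hpow a 1 0))))))).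
  change (hf a ?z) with (hpow a 1 z) in L4.
  lra.
Qed.

Lemma no_down a b s : (forall x, eval_word a b (relR s) x = x) ->
  (forall x, hf b x < x) -> (forall x, x <= hf a x) -> False.
Proof.
  intros HR Hb Ha. pose proof (star a b s HR 0) as E.
  set (w := hpow a 1 (hpow b 1 0)) in *.
  rewrite (split_l b s w) in E.
  assert (L1 : hpow b 1 (hpow a 1 (hpow b (s-1) (hpow b 1 w))) <
               hpow b 1 (hpow a 1 (hpow b (s-1) w))).
  { repeat apply hpow_lt. apply Hb. }
  assert (L2 : w <= hpow a 1 (hpow b 1 (hpow a 1 0))).
  { unfold w. repeat apply hpow_le. apply Ha. }
  assert (L3 : hpow b 1 (hpow a 1 (hpow b (s-1) w)) <=
     hpow b 1 (hpow a 1 (hpow b (s-1) (hpow a 1 (hpow b 1 (hpow a 1 0)))))).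
  { apply hpow_le, hpow_le, hpow_le. exact L2. }
  assert (L4 := Ha (hpow b 1 (hpow a 1 (hpow b (s-1) (hpow a 1 (hpow b 1 (hpow a 1 0))))))).
  change (hf a ?z) with (hpow a 1 z) in L4.
  lra.
Qed.

Lemma no_fix_sign (b : homeo) : (~ exists x, hf b x = x) ->
  (forall x, x < hf b x) \/ (forall x, hf b x < x).
Proof.
  intro Hn.
  assert (Hne : forall x, hf b x <> x) by (intros x E; apply Hn; exists x; exact E).
  destruct (classic (forall x, x < hf b x)) as [H|H]; [left; exact H|right].
  apply not_all_ex_not in H. destruct H as [x1 H1].
  assert (B1 : hf b x1 < x1) by (destruct (Rtotal_order (hf b x1) x1) as [|[|]]; auto;
      [exfalso; apply (Hne x1); auto | exfalso; auto]).
  intro x2. destruct (Rtotal_order (hf b x2) x2) as [L|[L|L]]; auto.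
  - exfalso; apply (Hne x2); auto.
  - exfalso.
    assert (Hc : continuity (fun x => hf b x - x)).
    { apply (continuity_minus (hf b) (fun x => x)). apply hf_cont.
      apply derivable_continuous, derivable_id. }
    assert (Hc' : continuity (fun x => x - hf b x)).
    { apply (continuity_minus (fun x => x) (hf b)).
      apply derivable_continuous, derivable_id. apply hf_cont. }
    destruct (Rtotal_order x1 x2) as [O|[O|O]].
    + destruct (IVT _ x1 x2 Hc O) as [z [_ Hz]]; [lra|lra|].
      apply (Hne z). lra.
    + subst. lra.
    + destruct (IVT _ x2 x1 Hc' O) as [z [_ Hz]]; [lra|lra|].
      apply (Hne z). lra.
Qed.

Theorem proposition3p5 (s p q : Z) :
  (3 <= s)%Z -> (0 < q)%Z -> Z.gcd p q = 1%Z ->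
  ((4 * s + 7) * q <= p)%Z ->
  forall a b : homeo, is_action s p q a b ->
  exists x : R, forall w : word, eval_word a b w x = x.
Proof.
  intros Hs Hq _ Hp a b Hact.
  pose proof (opposition a b s p q Hs Hq Hp Hact) as Hop.
  destruct Hact as [HR HS].
  destruct (classic (exists x, hf b x = x)) as [[x Hx]|Hn].
  - assert (Ha : hf a x = x).
    { destruct (Hop x) as [H1 H2].
      destruct (Rtotal_order (hf a x) x) as [L|[L|L]]; auto.
      + specialize (H2 L). lra.
      + specialize (H1 L). lra. }
    exists x. intro w. induction w as [|[g n] w IH]; simpl; auto.
    rewrite IH. destruct g; apply hpow_fix; auto.
  - exfalso. destruct (no_fix_sign b Hn) as [Hb|Hb].
    + apply (no_up a b s HR Hb). intro x.
      destruct (Rle_dec (hf a x) x) as [L|L]; auto. exfalso.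
      apply Rnot_le_lt in L. destruct (Hop x) as [H1 _]. specialize (H1 L).
      specialize (Hb x). lra.
    + apply (no_down a b s HR Hb). intro x.
      destruct (Rle_dec x (hf a x)) as [L|L]; auto. exfalso.
      apply Rnot_le_lt in L. destruct (Hop x) as [_ H2]. specialize (H2 L).
      specialize (Hb x). lra.
Qed.
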